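(* Let $\Theta$ be a $k\times k$ complex matrix whose spectrum is disjoint from $-\mathbb{N}$, and let $\mathcal{E}(\Theta)$ be the free $B$-module with basis $e=(e_1,\dots,e_k)$ endowed with the action of $a$ determined by $ae=\Theta\,be$ (i.e. $ae_j=\sum_i\Theta_{j,i}be_i$) and $a(S(b)x)=S(b)ax+b^2S'(b)x$ for $S\in B$. Then the continuous actions of the algebras $\mathbb{C}[a]$ and $B$ on $\mathcal{E}(\Theta)$ are the restrictions of a continuous left action of $\tilde{\mathcal{A}}_{conv.}$ on $\mathcal{E}(\Theta)$.
   Context: $\tilde{\mathcal{A}}_{conv.}$ is the algebra of formal series $\sum\gamma_{p,q}a^pb^q$ in variables $a,b$ with $ab-ba=b^2$ (product extending that of the polynomial algebra with this relation) such that $|\gamma_{p,q}|\le C_RR^{p+q}q!$ for some $R>1$, $C_R>0$. $B=\mathbb{C}\{\{b\}\}\subset\tilde{\mathcal{A}}_{conv.}$ is the subalgebra of series $S(b)=\sum c_qb^q$ with $|c_q|\le CR^qq!$ for some $C,R$, and $S'$ is the derivative in $b$. The topologies are the natural inductive limit topologies defined by these Gevrey bounds (on $\mathcal{E}(\Theta)\simeq B^k$ coordinatewise). *)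

(* Defs.v *)
From HB Require Import structures.
From mathcomp Require Import all_boot all_order all_algebra.
From mathcomp Require Import reals.
From mathcomp Require Export complex.
Set Implicit Arguments. Unset Strict Implicit. Unset Printing Implicit Defensive.
Import Order.TTheory GRing.Theory Num.Theory.
Local Open Scope ring_scope.
Local Open Scope complex_scope.

Section Defs.
Variable R : realType.
Local Notation C := R[i].

(* A formal series  sum_{p,q} g p q a^p b^q  (normal ordered: a's on the left). *)
Definition series2 := nat -> nat -> C.
Definition series1 := nat -> C.

Definition gev2 (Rr K : R) (g : series2) : Prop :=
  forall p q, `|g p q| <= (K * Rr ^+ (p + q) * (q`!)%:R)%:C.
Definition Aconv (g : series2) : Prop :=
  exists Rr K : R, 1 < Rr /\ 0 < K /\ gev2 Rr K g.

Definition gev1 (Rr K : R) (c : series1) : Prop :=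
  forall q, `|c q| <= (K * Rr ^+ q * (q`!)%:R)%:C.
Definition Bconv (c : series1) : Prop :=
  exists Rr K : R, gev1 Rr K c.

(* Elements of E(Theta) = B^k, written in the basis e: x = sum_i x_i(b) e_i.
   Gevrey bound coordinatewise. *)
Definition Evec (k : nat) := 'I_k -> series1.
Definition gevE k (Rr K : R) (x : Evec k) : Prop := forall i, gev1 Rr K (x i).
Definition Econv k (x : Evec k) : Prop := exists Rr K : R, gevE Rr K x.

(* Normal ordering coefficients:  b^q a^r = sum_i Nord q r i a^i b^(q+r-i),
   from b^m a = a b^m - m b^(m+1)  (a consequence of ab - ba = b^2). *)
Fixpoint Nord (q r i : nat) : C :=
  match r with
  | 0 => (i == 0)%:R
  | r'.+1 => (if i is i'.+1 then Nord q r' i' else 0)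
             - ((q + r')%:R - i%:R) * Nord q r' i
  end.

(* Product of \tilde A_conv (extending the product of C<a,b>/(ab-ba-b^2)):
   (a^p b^q)(a^r b^s) = sum_i Nord q r i a^(p+i) b^(q+r-i+s). All sums finite. *)
Definition amul (f g : series2) : series2 := fun P Q =>
  \sum_(p < (P + Q).+1) \sum_(q < (P + Q).+1) \sum_(r < (P + Q).+1)
  \sum_(s < (P + Q).+1) \sum_(i < (P + Q).+1)
    (if (P == p + i)%N && (Q + i == q + r + s)%N
     then f p q * g r s * Nord q r i else 0).

Definition aadd (f g : series2) : series2 := fun p q => f p q + g p q.
Definition ascale (c : C) (f : series2) : series2 := fun p q => c * f p q.
Definition amon (n : nat) : series2 := fun p q => ((p == n) && (q == 0%N))%:R.
Definition embB (S : series1) : series2 := fun p q => if p == 0%N then S q else 0.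

Definition Eadd k (x y : Evec k) : Evec k := fun i q => x i q + y i q.
Definition Escale k (c : C) (x : Evec k) : Evec k := fun i q => c * x i q.

(* action of a on E(Theta):  a e_j = sum_i Theta_{j,i} b e_i,
   a (S(b) x) = S(b) a x + b^2 S'(b) x.  In coordinates:
   (a x)_i = b sum_j Theta_{j,i} x_j + b^2 x_i'. *)
Definition actA k (Theta : 'M[C]_k) (x : Evec k) : Evec k := fun i q =>
  if q is q'.+1 then \sum_(j < k) Theta j i * x j q' + q'%:R * x i q' else 0.

Definition actB k (S : series1) (x : Evec k) : Evec k := fun i q =>
  \sum_(n < q.+1) S n * x i (q - n)%N.

End Defs.

(* Main.v *)
Require Import Defs.
From HB Require Import structures.
From mathcomp Require Import all_boot all_order all_algebra.
From mathcomp Require Import reals.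
From mathcomp Require Import complex.
From mathcomp Require Import zify ring lra.
From Stdlib Require Import FunctionalExtensionality.
Unset Implicit Arguments. Unset Strict Implicit. Unset Printing Implicit Defensive.
Import Order.TTheory GRing.Theory Num.Theory.
Local Open Scope ring_scope.
Local Open Scope complex_scope.

Section Work.
Variable R : realType.
Local Notation C := R[i].
Variable k : nat.
Variable Theta : 'M[C]_k.
Local Notation E := (Evec R k).
Local Notation A := (actA Theta).

Definition bsh (q : nat) (x : E) : E := fun i n => if (q <= n)%N then x i (n - q)%N else 0.
Definition term p q (x : E) : E := iter p A (bsh q x).
Definition rho (f : series2 R) (x : E) : E := fun i m =>
  \sum_(p < m.+1) \sum_(q < m.+1) f p q * term p q x i m.

Lemma funE (x y : E) : (forall i n, x i n = y i n) -> x = y.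
Proof. move=> H; apply: functional_extensionality => i; apply: functional_extensionality => n; exact: H. Qed.

Definition vanish v (z : E) := forall i n, (n < v)%N -> z i n = 0.

Lemma van_A v z : vanish v z -> vanish v.+1 (A z).
Proof.
move=> H i [|n] /= lt; rewrite /actA //.
rewrite big1 ?H ?mulr0 ?addr0 // => j _; by rewrite H ?mulr0.
Qed.

Lemma van_iter p v z : vanish v z -> vanish (p + v) (iter p A z).
Proof. elim: p => [//|p IH] /= Hz; exact: van_A _ _ (IH Hz). Qed.

Lemma van_bsh q x : vanish q (bsh q x).
Proof. by move=> i n lt; rewrite /bsh leqNgt lt. Qed.

Lemma term0 p q x i m : (m < p + q)%N -> term p q x i m = 0.
Proof. move=> lt; exact: (van_iter p q _ (van_bsh q x) i m lt). Qed.

Lemma sum_ext0 (F : nat -> C) n N : (n <= N)%N ->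
  (forall j, (n <= j)%N -> (j < N)%N -> F j = 0) ->
  \sum_(j < n) F j = \sum_(j < N) F j.
Proof.
move=> le H; rewrite (big_ord_widen N F le) big_mkcond; apply: eq_bigr => j _.
by case: ifP => // /negbT; rewrite -leqNgt => h; rewrite H.
Qed.

Lemma widen2 (h : nat -> nat -> C) m N : (m < N)%N ->
  (forall p q, (m < p + q)%N -> h p q = 0) ->
  \sum_(p < m.+1) \sum_(q < m.+1) h p q = \sum_(p < N) \sum_(q < N) h p q.
Proof.
move=> lt H.
rewrite (@sum_ext0 (fun p => \sum_(q < m.+1) h p q) m.+1 N) //; last first.
  move=> j le _; rewrite big1 // => q _; apply: H; lia.
apply: eq_bigr => p _; apply: sum_ext0 => // j le _; apply: H; lia.
Qed.

Lemma rho_widen f x i m N : (m < N)%N ->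
  rho f x i m = \sum_(p < N) \sum_(q < N) f p q * term p q x i m.
Proof.
move=> lt; rewrite /rho (widen2 (fun p q => f p q * term p q x i m) m N lt) //.
by move=> p q h; rewrite term0 ?mulr0.
Qed.

Lemma A_lin (y y' : E) c : A (fun i n => y i n + c * y' i n) = (fun i n => A y i n + c * A y' i n).
Proof.
apply: funE => i [|n]; rewrite /actA ?mulr0 ?addr0 //.
have -> : \sum_(j < k) Theta j i * (y j n + c * y' j n) = \sum_(j < k) Theta j i * y j n + c * \sum_(j < k) Theta j i * y' j n.
  by rewrite mulr_sumr -big_split; apply: eq_bigr => j _; rewrite mulrDr mulrCA.
ring.
Qed.

Lemma A_sum N (G : nat -> E) :
  A (fun i n => \sum_(r < N) G r i n) = (fun i n => \sum_(r < N) A (G r) i n).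
Proof.
apply: funE => i [|n]; rewrite /actA; first by rewrite big1.
under eq_bigr do rewrite mulr_sumr.
by rewrite exchange_big mulr_sumr -big_split.
Qed.

Lemma iter_lin p (y y' : E) c : iter p A (fun i n => y i n + c * y' i n) =
  (fun i n => iter p A y i n + c * iter p A y' i n).
Proof. elim: p => [//|p IH] /=; by rewrite IH A_lin. Qed.

Lemma iter_sum p N (G : nat -> E) :
  iter p A (fun i n => \sum_(r < N) G r i n) = (fun i n => \sum_(r < N) iter p A (G r) i n).
Proof. elim: p => [//|p IH] /=; rewrite IH; exact: (A_sum N (fun r => iter p A (G r))). Qed.

Lemma iter_scale p (y : E) c : iter p A (fun i n => c * y i n) = (fun i n => c * iter p A y i n).
Proof.
have := iter_lin p (fun _ _ => 0) y c.
have z0 : iter p A (fun _ _ => 0) = (fun _ _ => 0).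
  have := iter_sum p 0 (fun _ => y); rewrite /=.
  have -> : (fun (i : 'I_k) (n : nat) => \sum_(r < 0) (y : E) i n) = (fun _ _ => 0).
    by apply: funE => i n; rewrite big_ord0.
  move=> ->; apply: funE => i n; by rewrite big_ord0.
rewrite z0.
have -> : (fun (i : 'I_k) (n : nat) => 0 + c * y i n) = (fun i n => c * y i n).
  by apply: funE => i n; rewrite add0r.
move=> ->; apply: funE => i n; by rewrite add0r.
Qed.

Lemma bsh_lin q (y y' : E) c : bsh q (fun i n => y i n + c * y' i n) =
  (fun i n => bsh q y i n + c * bsh q y' i n).
Proof. apply: funE => i n; rewrite /bsh; case: ifP => _ //; by rewrite mulr0 addr0. Qed.

Lemma bsh_sum q N (G : nat -> E) :
  bsh q (fun i n => \sum_(r < N) G r i n) = (fun i n => \sum_(r < N) bsh q (G r) i n).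
Proof. apply: funE => i n; rewrite /bsh; case: ifP => _ //; by rewrite big1. Qed.

Lemma bsh_scale q (y : E) c : bsh q (fun i n => c * y i n) = (fun i n => c * bsh q y i n).
Proof. apply: funE => i n; rewrite /bsh; case: ifP => _ //; by rewrite mulr0. Qed.

Lemma bsh_bsh a b (x : E) : bsh a (bsh b x) = bsh (a + b) x.
Proof.
apply: funE => i n; rewrite /bsh.
case: (leqP a n) => h1; case: (leqP b (n - a)) => h2; case: (leqP (a + b) n) => h3 //; try lia.
by rewrite subnDA.
Qed.

Lemma bsh0 (x : E) : bsh 0 x = x.
Proof. by apply: funE => i n; rewrite /bsh leq0n subn0. Qed.

Lemma comm1 m (z : E) : bsh m (A z) = (fun i n => A (bsh m z) i n + (- m%:R) * bsh m.+1 z i n).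
Proof.
apply: funE => i n; rewrite /bsh /actA.
case: n => [|n].
  by case: m => [|m] //=; rewrite mulr0 addr0.
case: (leqP m.+1 n.+1) => h.
  have hm : (m <= n)%N by lia.
  rewrite hm subSn // (_ : (m <= n.+1)%N = true); last by lia.
  rewrite subSS natrB //; ring.
case: (leqP m n) => h2; first by exfalso; lia.
rewrite big1 ?mulr0 ?addr0; last by move=> j _; rewrite mulr0.
case: ifP => // hm; rewrite (_ : (n.+1 - m)%N = 0%N) //; lia.
Qed.

Lemma Nord0 q r l : (r < l)%N -> Nord R q r l = 0.
Proof.
elim: r l => [|r IH] [|l] //= h.
by rewrite !IH ?subrr ?mulr0 ?subr0 //; lia.
Qed.

Lemma comm_iter q r (z : E) : bsh q (iter r A z) =
  (fun i n => \sum_(l < r.+1) Nord R q r l * iter l A (bsh (q + r - l) z) i n).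
Proof.
elim: r z => [|r IH] z.
  by apply: funE => i n; rewrite big_ord1 /= addn0 subn0 mul1r.
rewrite iterSr IH; apply: funE => i n.
under eq_bigr => l _ do rewrite comm1 iter_lin -iterSr mulrDr.
rewrite big_split /=.
under [in RHS]eq_bigr => l _ do rewrite mulrBl.
rewrite sumrB.
set X := fun l : nat => iter l A (bsh (q + r.+1 - l) z) i n.
have -> : \sum_(l < r.+2) (match nat_of_ord l with 0%N => 0 | l'.+1 => Nord R q r l' end) * X l
   = \sum_(l < r.+1) Nord R q r l * X l.+1.
  by rewrite big_ord_recl /= mul0r add0r.
have -> : \sum_(l < r.+2) ((q + r)%:R - l%:R) * Nord R q r l * X l
   = \sum_(l < r.+1) ((q + r)%:R - l%:R) * Nord R q r l * X l.
  by rewrite big_ord_recr /= (Nord0 q r r.+1) // mulr0 mul0r addr0.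
rewrite -sumrN; congr (_ + _); apply: eq_bigr => l _; rewrite /X.
  by rewrite addnS subSS.
have hl : (l <= r)%N by case: l => l /=; lia.
rewrite (_ : 1 *- (q + r - l) = - ((q + r)%:R - l%:R :> C)); last by rewrite -natrB //; lia.
rewrite (_ : (q + r.+1 - l)%N = (q + r - l).+1); last by lia.
ring.
Qed.

Definition agree m (y y' : E) := forall i n, (n <= m)%N -> y i n = y' i n.

Lemma agree_A m y y' : agree m y y' -> agree m (A y) (A y').
Proof.
move=> H i [|n] le //=; rewrite /actA.
rewrite H; last by lia.
congr (_ + _); apply: eq_bigr => j _; rewrite H //; lia.
Qed.

Lemma agree_term p q m y y' : agree m y y' -> agree m (term p q y) (term p q y').
Proof.
move=> H; rewrite /term.
have Hb : agree m (bsh q y) (bsh q y').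
  move=> i n le; rewrite /bsh; case: ifP => // _; apply: H; lia.
elim: p => [//|p IH] /=; exact: agree_A.
Qed.

Lemma term_lin p q N (c : nat -> nat -> C) (G : nat -> nat -> E) :
  term p q (fun j n => \sum_(r < N) \sum_(s < N) c r s * G r s j n) =
  (fun j n => \sum_(r < N) \sum_(s < N) c r s * term p q (G r s) j n).
Proof.
rewrite /term (bsh_sum q N (fun r j n => \sum_(s < N) c r s * G r s j n)).
rewrite (iter_sum p N (fun r => bsh q (fun j n => \sum_(s < N) c r s * G r s j n))).
apply: funE => j n; apply: eq_bigr => r _.
rewrite (bsh_sum q N (fun s j n => c r s * G r s j n)).
rewrite (iter_sum p N (fun s => bsh q (fun j n => c r s * G r s j n))).
apply: eq_bigr => s _.
by rewrite bsh_scale iter_scale.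
Qed.

Lemma term_comp p q r s (x : E) : term p q (term r s x) =
  (fun i n => \sum_(l < r.+1) Nord R q r l * term (p + l) (q + r + s - l) x i n).
Proof.
rewrite {1}/term /term comm_iter.
rewrite (iter_sum p r.+1 (fun l i n => Nord R q r l * iter l A (bsh (q + r - l) (bsh s x)) i n)).
apply: funE => i n; apply: eq_bigr => l _.
rewrite iter_scale bsh_bsh iterD.
have hl : (l <= r)%N by case: l => l /=; lia.
by rewrite (_ : (q + r - l + s)%N = (q + r + s - l)%N) //; lia.
Qed.

Definition sum5 n (F : nat -> nat -> nat -> nat -> nat -> C) :=
  \sum_(p < n) \sum_(q < n) \sum_(r < n) \sum_(s < n) \sum_(i < n) F p q r s i.

Lemma sum5_widen n N F : (n <= N)%N ->
  (forall p q r s i, (n <= maxn p (maxn q (maxn r (maxn s i))))%N -> F p q r s i = 0) ->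
  sum5 n F = sum5 N F.
Proof.
move=> le H; rewrite /sum5.
rewrite (sum_ext0 (fun p => \sum_(q < n) \sum_(r < n) \sum_(s < n) \sum_(i < n) F p q r s i) n N le); last first.
  move=> p hp _; do 3 (rewrite big1 // => ? _); rewrite big1 // => ? _; apply: H; lia.
apply: eq_bigr => p _.
rewrite (sum_ext0 (fun q => \sum_(r < n) \sum_(s < n) \sum_(i < n) F p q r s i) n N le); last first.
  move=> q hq _; do 2 (rewrite big1 // => ? _); rewrite big1 // => ? _; apply: H; lia.
apply: eq_bigr => q _.
rewrite (sum_ext0 (fun r => \sum_(s < n) \sum_(i < n) F p q r s i) n N le); last first.
  move=> r hr _; do 1 (rewrite big1 // => ? _); rewrite big1 // => ? _; apply: H; lia.
apply: eq_bigr => r _.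
rewrite (sum_ext0 (fun s => \sum_(i < n) F p q r s i) n N le); last first.
  move=> s hs _; rewrite big1 // => ? _; apply: H; lia.
apply: eq_bigr => s _.
apply: sum_ext0 => // i hi _; apply: H; lia.
Qed.

Definition amulF (f g : series2 R) P Q := fun p q r s i =>
  if (P == p + i)%N && (Q + i == q + r + s)%N then f p q * g r s * Nord R q r i else 0.

Lemma amul_box f g P Q N : (P + Q < N)%N -> amul f g P Q = sum5 N (amulF f g P Q).
Proof.
move=> lt; rewrite -(sum5_widen (P + Q).+1 N) //.
move=> p q r s i h; rewrite /amulF; case: ifP => // /andP [/eqP e1 /eqP e2]; lia.
Qed.

Lemma ex1 n (F : nat -> nat -> C) : \sum_(a < n) \sum_(b < n) F a b = \sum_(b < n) \sum_(a < n) F a b.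
Proof. exact: exchange_big. Qed.

Lemma ex5 n (F : nat -> nat -> nat -> nat -> nat -> nat -> C) :
  \sum_(a < n) sum5 n (F a) = sum5 n (fun p q r s i => \sum_(a < n) F a p q r s i).
Proof.
rewrite /sum5 exchange_big; apply: eq_bigr => p _.
rewrite exchange_big; apply: eq_bigr => q _.
rewrite exchange_big; apply: eq_bigr => r _.
rewrite exchange_big; apply: eq_bigr => s _.
by rewrite exchange_big.
Qed.

Lemma sum_delta n (a : nat) (F : nat -> C) :
  \sum_(j < n) (if (nat_of_ord j == a)%N then F j else 0) = if (a < n)%N then F a else 0.
Proof.
case: ifP => h.
  rewrite (bigD1 (Ordinal h)) //= eqxx big1 ?addr0 // => j hj.
  case: ifP => // /eqP e; exfalso; move: hj; apply/negP; rewrite negbK; apply/eqP/val_inj => /=; done.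
rewrite big1 // => j _; case: ifP => // /eqP e; exfalso; move: h (ltn_ord j); rewrite e => ->.
done.
Qed.

Lemma collapse f g (x : E) j0 m p q r s i :
  \sum_(P < m.+1) \sum_(Q < m.+1) amulF f g P Q p q r s i * term P Q x j0 m =
  f p q * g r s * Nord R q r i * term (p + i) (q + r + s - i) x j0 m.
Proof.
rewrite /amulF.
case: (leqP i r) => hir; last first.
  rewrite Nord0 // mulr0 mul0r big1 // => P _; rewrite big1 // => Q _.
  by case: ifP; rewrite ?mulr0 ?mul0r.
set M := (q + r + s - i)%N.
set c := f p q * g r s * Nord R q r i.
pose H := fun P Q : nat => c * term P Q x j0 m.
pose G := fun P : nat => \sum_(Q < m.+1) (if (nat_of_ord Q == M)%N then H P Q else 0).
transitivity (\sum_(P < m.+1) (if (nat_of_ord P == p + i)%N then G P else 0)).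
  apply: eq_bigr => P _; rewrite /G /H; case: eqP => eP /=.
    apply: eq_bigr => Q _; case: eqP => eQ.
      by rewrite ifT //; apply/eqP; rewrite /M in eQ; lia.
    by rewrite ifF ?mul0r //; apply/negP => /eqP h; apply: eQ; rewrite /M; lia.
  by rewrite big1 // => Q _; rewrite mul0r.
rewrite sum_delta /G sum_delta /H.
case: (ltnP (p + i) m.+1) => h1; case: (ltnP M m.+1) => h2 //; rewrite term0 ?mulr0 //; lia.
Qed.

Lemma rho_assoc f g x : rho (amul f g) x = rho f (rho g x).
Proof.
apply: funE => j0 m.
set N := m.+1.
have L1 : rho (amul f g) x j0 m = \sum_(P < N) \sum_(Q < N)
    sum5 N (fun p q r s i => amulF f g P Q p q r s i * term P Q x j0 m).
  rewrite /rho; apply: eq_bigr => P _; apply: eq_bigr => Q _.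
  case: (leqP (P + Q) m) => h.
    rewrite (amul_box f g P Q N); last by rewrite /N; lia.
    rewrite /sum5 big_distrl; apply: eq_bigr => p _.
    rewrite big_distrl; apply: eq_bigr => q _.
    rewrite big_distrl; apply: eq_bigr => r _.
    rewrite big_distrl; apply: eq_bigr => s _.
    by rewrite big_distrl.
  rewrite term0 // mulr0 /sum5.
  do 4 (rewrite big1 // => ? _); rewrite big1 // => ? _; by rewrite mulr0.
have L2 : \sum_(P < N) \sum_(Q < N) sum5 N (fun p q r s i => amulF f g P Q p q r s i * term P Q x j0 m)
   = sum5 N (fun p q r s i => \sum_(P < N) \sum_(Q < N) amulF f g P Q p q r s i * term P Q x j0 m).
  transitivity (\sum_(P < N) sum5 N (fun p q r s i => \sum_(Q < N) amulF f g P Q p q r s i * term P Q x j0 m)).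
    apply: eq_bigr => P _; exact: (ex5 N (fun Q p q r s i => amulF f g P Q p q r s i * term P Q x j0 m)).
  exact: (ex5 N (fun P p q r s i => \sum_(Q < N) amulF f g P Q p q r s i * term P Q x j0 m)).
rewrite L1 L2 (rho_widen f (rho g x) j0 m N) //.
pose y' : E := fun j n => \sum_(r < N) \sum_(s < N) g r s * term r s x j n.
have Hag : agree m (rho g x) y'.
  move=> j n le; rewrite (rho_widen g x j n N) //; rewrite /N; lia.
rewrite /sum5; apply: eq_bigr => p _; apply: eq_bigr => q _.
rewrite (agree_term p q m _ _ Hag j0 m (leqnn m)) /y'.
rewrite (term_lin p q N g (fun r s => term r s x)) mulr_sumr; apply: eq_bigr => r _.
rewrite mulr_sumr; apply: eq_bigr => s _.
rewrite term_comp.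
rewrite (sum_ext0 (fun l => Nord R q r l * term (p + l) (q + r + s - l) x j0 m) r.+1 N); last first.
    by move=> l hl _; rewrite Nord0 ?mul0r //.
  by rewrite /N; case: r => r /= ; lia.
rewrite !mulr_sumr; apply: eq_bigr => i _.
by rewrite collapse !mulrA.
Qed.

Lemma rho_addf f g c x : rho (aadd f (ascale c g)) x = Eadd (rho f x) (Escale c (rho g x)).
Proof.
apply: funE => i m; rewrite /rho /Eadd /Escale /aadd /ascale mulr_sumr -big_split.
apply: eq_bigr => p _; rewrite mulr_sumr -big_split; apply: eq_bigr => q _ /=.
by rewrite mulrDl mulrA.
Qed.

Lemma term_linx p q (x y : E) c : term p q (fun i n => x i n + c * y i n) =
  (fun i n => term p q x i n + c * term p q y i n).
Proof. by rewrite /term bsh_lin iter_lin. Qed.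

Lemma rho_linx f c x y : rho f (Eadd x (Escale c y)) = Eadd (rho f x) (Escale c (rho f y)).
Proof.
have -> : Eadd x (Escale c y) = (fun i n => x i n + c * y i n) by [].
apply: funE => i m; rewrite /rho /Eadd /Escale mulr_sumr -big_split.
apply: eq_bigr => p _; rewrite mulr_sumr -big_split; apply: eq_bigr => q _ /=.
by rewrite term_linx mulrDr mulrCA.
Qed.

Lemma rho_amon n x : rho (amon R n) x = iter n A x.
Proof.
apply: funE => i m; rewrite /rho /amon.
transitivity (\sum_(p < m.+1) (if (nat_of_ord p == n)%N then term p 0 x i m else 0)).
  apply: eq_bigr => p _; rewrite big_ord_recl /= andbT big1 ?addr0; last first.
    by move=> q _; rewrite andbF mul0r.
  by case: eqP => _; rewrite ?mul1r ?mul0r.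
rewrite (sum_delta m.+1 n (fun p => term p 0 x i m)).
rewrite /term bsh0; case: ltnP => // h.
have := van_iter n 0 x (fun _ _ (h : (_ < 0)%N) => False_ind _ (notF h)) i m.
by rewrite addn0 => ->.
Qed.

Lemma rho_amon0 x : rho (amon R 0) x = x.
Proof. by rewrite rho_amon. Qed.

Lemma rho_embB S x : rho (embB S) x = actB S x.
Proof.
apply: funE => i m; rewrite /rho /embB /actB big_ord_recl /=.
rewrite [X in _ + X = _]big1 ?addr0; last first.
  by move=> p _; rewrite big1 // => q _; rewrite mul0r.
apply: eq_bigr => q _; rewrite /term /= /bsh.
by case: q => q /= h; rewrite -ltnS h.
Qed.

Definition cn (w : C) : R := complex.Re `|w|.
Lemma cnE w : `|w| = (cn w)%:C.
Proof. by rewrite /cn RRe_real // normr_real. Qed.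
Lemma cn_ge0 w : 0 <= cn w.
Proof. rewrite -lecR -cnE; exact: normr_ge0. Qed.
Lemma cnD a b : cn (a + b) <= cn a + cn b.
Proof. by rewrite -lecR rmorphD -!cnE ler_normD. Qed.
Lemma cnM a b : cn (a * b) = cn a * cn b.
Proof. have h := normrM a b; rewrite !cnE -rmorphM in h; by case: h. Qed.
Lemma cn_sum n (F : 'I_n -> C) : cn (\sum_(j < n) F j) <= \sum_(j < n) cn (F j).
Proof.
rewrite -lecR -cnE; apply: le_trans (ler_norm_sum _ _ _) _.
rewrite rmorph_sum; apply: ler_sum => j _; by rewrite cnE.
Qed.
Lemma cn_nat n : cn n%:R = n%:R.
Proof. by rewrite /cn normr_nat -(rmorph_nat (real_complex R)). Qed.
Lemma cn0 : cn 0 = 0.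
Proof. by rewrite (cn_nat 0). Qed.

Definition T : R := 1 + \sum_(i < k) \sum_(j < k) cn (Theta j i).
Lemma T_ge1 : 1 <= T.
Proof. rewrite /T lerDl; apply: sumr_ge0 => i _; apply: sumr_ge0 => j _; exact: cn_ge0. Qed.

Definition bnd (L c : R) (z : E) := forall i n, cn (z i n) <= L * c ^+ n * (n`!)%:R.

Lemma bnd_A L c z : 0 <= L -> 1 <= c -> bnd L c z -> bnd (T * L) c (A z).
Proof.
move=> L0 c1 H i [|n]; rewrite /actA.
  rewrite cn0; apply: mulr_ge0; last exact: ler0n.
  apply: mulr_ge0; [apply: mulr_ge0 => //; apply: le_trans T_ge1; exact: ler01|].
  by rewrite expr0.
set B := L * c ^+ n * (n`!)%:R.
have B0 : 0 <= B by rewrite /B; apply: mulr_ge0; [apply: mulr_ge0 => //; apply: exprn_ge0; apply: le_trans c1|apply: ler0n].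
set s := \sum_(j < k) cn (Theta j i).
have s0 : 0 <= s by apply: sumr_ge0 => j _; exact: cn_ge0.
have sT : s <= T - 1.
  rewrite /T addrC addKr /s [X in _ <= X](bigD1 i) //= lerDl.
  by apply: sumr_ge0 => j _; apply: sumr_ge0 => j' _; exact: cn_ge0.
have h1 : cn (\sum_(j < k) Theta j i * z j n) <= s * B.
  apply: le_trans (cn_sum _ _) _; rewrite /s mulr_suml; apply: ler_sum => j _.
  rewrite cnM; apply: ler_wpM2l; [exact: cn_ge0|exact: H].
have h2 : cn (n%:R * z i n) <= n%:R * B.
  by rewrite cnM cn_nat; apply: ler_wpM2l; [exact: ler0n|exact: H].
apply: le_trans (cnD _ _) _.
apply: le_trans (lerD h1 h2) _.
have -> : T * L * c ^+ n.+1 * (n.+1`!)%:R = (T * c * (n.+1)%:R) * B.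
  by rewrite /B factS natrM exprSr; ring.
rewrite -mulrDl; apply: ler_wpM2r => //.
have T1 := T_ge1.
have n0 : 0 <= (n%:R : R) by exact: ler0n.
rewrite -natr1.
have e1 : T * (n%:R + 1) <= T * c * (n%:R + 1).
  rewrite -mulrA ler_wpM2l //; first by lra.
  by rewrite -{1}[n%:R + 1]mul1r ler_wpM2r //; lra.
apply: le_trans e1; nra.
Qed.

Lemma bnd_iter p L c z : 0 <= L -> 1 <= c -> bnd L c z -> bnd (T ^+ p * L) c (iter p A z).
Proof.
move=> L0 c1 H; elim: p => [|p IH] /=; first by rewrite expr0 mul1r.
rewrite exprS -mulrA; apply: bnd_A => //.
apply: mulr_ge0 => //; apply: exprn_ge0; apply: le_trans T_ge1; exact: ler01.
Qed.

Lemma fact_pos n : (0 : R) < (n`!)%:R.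
Proof. by rewrite ltr0n fact_gt0. Qed.

Lemma bnd_bsh q K c x : 0 <= K -> 1 <= c -> bnd K c x -> bnd (K / (q`!)%:R) c (bsh q x).
Proof.
move=> K0 c1 H i n; rewrite /bsh.
have c0 : 0 <= c by apply: le_trans c1; exact: ler01.
have q0 := fact_pos q.
case: leqP => hq; last first.
  rewrite cn0; apply: mulr_ge0; last exact: ler0n.
  apply: mulr_ge0; last exact: exprn_ge0.
  by apply: divr_ge0 => //; exact: ltW.
apply: le_trans (H i (n - q)%N) _.
have hf : ((n - q)`!)%:R * (q`!)%:R <= (n`!)%:R :> R.
  rewrite -natrM ler_nat -(bin_fact hq) mulnC leq_pmull // bin_gt0 //.
have hc : c ^+ (n - q) <= c ^+ n by apply: ler_weXn2l => //; exact: leq_subr.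
have -> : K / (q`!)%:R * c ^+ n * (n`!)%:R = K * c ^+ n * ((n`!)%:R / (q`!)%:R).
  ring.
rewrite -mulrA -[X in _ <= X]mulrA ler_wpM2l //.
apply: ler_pM => //; first exact: exprn_ge0.
by rewrite ler_pdivlMr.
Qed.

Lemma term_bnd p q K c x : 0 <= K -> 1 <= c -> bnd K c x ->
  bnd (T ^+ p * (K / (q`!)%:R)) c (term p q x).
Proof.
move=> K0 c1 H; apply: bnd_iter => //.
  by apply: divr_ge0 => //; exact: ltW (fact_pos q).
exact: bnd_bsh.
Qed.

Lemma sq_le4 m : (m.+1 * m.+1 <= 4 ^ m)%N.
Proof.
elim: m => [//|m IH]; rewrite expnS.
apply: leq_trans (_ : 4 * (m.+1 * m.+1) <= 4 * 4 ^ m)%N; last by rewrite leq_mul2l.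
nia.
Qed.

Lemma cont Rr : 1 < Rr -> forall (f : series2 R) (x : E) (K1 K2 : R),
  gev2 Rr K1 f -> gevE Rr K2 x -> gevE (4 * T * Rr ^+ 3) (1 * K1 * K2) (rho f x).
Proof.
move=> R1 f x K1 K2 hf hx i m.
have c1 : 1 <= Rr by exact: ltW.
have c0 : 0 <= Rr by apply: le_trans c1; exact: ler01.
have T1 := T_ge1.
have T0 : 0 <= T by apply: le_trans T1; exact: ler01.
have hf' : forall p q, cn (f p q) <= K1 * Rr ^+ (p + q) * (q`!)%:R.
  by move=> p q; rewrite -lecR -cnE; exact: hf.
have hx' : bnd K2 Rr x by move=> j n; rewrite -lecR -cnE; exact: hx.
have K10 : 0 <= K1.
  by have := hf' 0%N 0%N; rewrite expr0 mulr1 mulr1 => h; apply: le_trans h; exact: cn_ge0.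
have K20 : 0 <= K2.
  by have := hx' i 0%N; rewrite expr0 mulr1 mulr1 => h; apply: le_trans h; exact: cn_ge0.
rewrite cnE lecR.
set Cst := K1 * K2 * T ^+ m * Rr ^+ (3 * m) * (m`!)%:R.
have Cst0 : 0 <= Cst.
  rewrite /Cst; repeat apply: mulr_ge0 => //; try exact: exprn_ge0; exact: ler0n.
have step : forall p q : 'I_m.+1, cn (f p q * term p q x i m) <= Cst.
  move=> p q; rewrite cnM.
  have ht := term_bnd p q K2 Rr x K20 c1 hx' i m.
  have q0 := fact_pos q.
  apply: le_trans (ler_pM (cn_ge0 _) (cn_ge0 _) (hf' p q) ht) _.
  have -> : K1 * Rr ^+ (p + q) * (q`!)%:R * (T ^+ p * (K2 / (q`!)%:R) * Rr ^+ m * (m`!)%:R)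
     = K1 * K2 * T ^+ p * Rr ^+ (p + q + m) * (m`!)%:R.
    rewrite !exprD; field; exact: lt0r_neq0.
  have hp : (p <= m)%N by rewrite -ltnS.
  have hq : (q <= m)%N by rewrite -ltnS.
  rewrite /Cst; apply: ler_wpM2r; first exact: ler0n.
  apply: ler_pM.
  - repeat apply: mulr_ge0 => //; exact: exprn_ge0.
  - exact: exprn_ge0.
  - apply: ler_wpM2l; first exact: mulr_ge0.
    exact: ler_weXn2l.
  - apply: ler_weXn2l => //; lia.
apply: le_trans (cn_sum _ _) _.
apply: le_trans (_ : \sum_(p < m.+1) \sum_(q < m.+1) Cst <= _).
  apply: ler_sum => p _; apply: le_trans (cn_sum _ _) _; apply: ler_sum => q _; exact: step.
rewrite !sumr_const !card_ord -mulrnA -[Cst *+ _]mulr_natr.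
have h4 : ((m.+1 * m.+1)%N%:R : R) <= (4 ^ m)%N%:R by rewrite ler_nat sq_le4.
apply: le_trans (ler_wpM2l Cst0 h4) _.
have e1 : Rr ^+ (3 * m) = (Rr ^+ m) ^+ 3 by rewrite mulnC exprM.
have e2 : (4 * T * Rr ^+ 3) ^+ m = 4 ^+ m * T ^+ m * (Rr ^+ m) ^+ 3.
  rewrite !exprMn; ring.
rewrite /Cst e1 e2 natrX le_eqVlt; apply/orP; left; apply/eqP; ring.
Qed.

End Work.

Theorem corollary1p1p9 (R : realType) (k : nat) (Theta : 'M[R[i]]_k) :
  (forall n : nat, ~~ eigenvalue Theta (- (n%:R : R[i]))) ->
  exists rho : series2 R -> Evec R k -> Evec R k,
    (* left module structure *)
    (forall f g c x, Aconv f -> Aconv g -> Econv x ->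
       rho (aadd f (ascale c g)) x = Eadd (rho f x) (Escale c (rho g x))) /\
    (forall f c x y, Aconv f -> Econv x -> Econv y ->
       rho f (Eadd x (Escale c y)) = Eadd (rho f x) (Escale c (rho f y))) /\
    (forall x, Econv x -> rho (amon R 0) x = x) /\
    (forall f g x, Aconv f -> Aconv g -> Econv x ->
       rho (amul f g) x = rho f (rho g x)) /\
    (* restriction to C[a] and to B *)
    (forall (n : nat) x, Econv x -> rho (amon R n) x = iter n (actA Theta) x) /\
    (forall S x, Bconv S -> Econv x -> rho (embB S) x = actB S x) /\
    (* continuity for the inductive limit (Gevrey) topologies *)
    (forall Rr : R, 1 < Rr -> exists (Rr' M : R), 1 < Rr' /\ 0 < M /\
       forall (f : series2 R) (x : Evec R k) (K1 K2 : R),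
         gev2 Rr K1 f -> gevE Rr K2 x -> gevE Rr' (M * K1 * K2) (rho f x)).
Proof.
move=> _; exists (rho R k Theta).
split; first by move=> f g c x _ _ _; exact: rho_addf.
split; first by move=> f c x y _ _ _; exact: rho_linx.
split; first by move=> x _; exact: rho_amon0.
split; first by move=> f g x _ _ _; exact: rho_assoc.
split; first by move=> n x _; exact: rho_amon.
split; first by move=> S x _ _; exact: rho_embB.
move=> Rr hR; exists (4 * T R k Theta * Rr ^+ 3), 1.
split.
  have T1 := T_ge1 R k Theta.
  have h3 : 1 < Rr ^+ 3 by rewrite expr_gt1 // ltW // (lt_trans ltr01).
  have : 1 * 1 < (4 * T R k Theta) * Rr ^+ 3.
    apply: ltr_pM => //; lra.
  by rewrite mul1r.
split; first exact: ltr01.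
exact: cont.
Qed.
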